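(* Let $\Theta\sim U[0,1]$ and let $T^{2,1,3/2,\Theta}$ be the random policy with $T^{2,1,3/2,\Theta}_i=\mathcal{R}^{3/2}_{2,1,\Theta}(T_i^* )$ for $i\in[n]$. Then $T^{2,1,3/2,\Theta}$ is resource-feasible with probability 1 and $\mathbb{E}_\Theta[F(T^{2,1,3/2,\Theta})]\le\frac{5}{6\ln 2}\cdot\mathrm{OPT}(P)$.
   Context: An instance consists of integers $n\ge 1$, $D\ge 1$; a joint ordering cost $K_0>0$; for each commodity $i\in[n]$ an ordering cost $K_i>0$ and a holding coefficient $H_i>0$; and resource coefficients $\alpha_{id}\ge 0$. A policy is $T=(T_1,\dots,T_n)\in\mathbb{R}_{>0}^n$; it is resource-feasible if $\sum_{i}\alpha_{id}/T_i\le 1$ for every $d\in[D]$. For $g>0$, $\Delta\ge 0$, $\mathcal{M}_{g,\Delta}=\{0,g,\dots,\lfloor\Delta/g\rfloor g\}$; $N(T,\Delta)=|\bigcup_{i}\mathcal{M}_{T_i,\Delta}|$; $J(T)=K_0\limsup_{\Delta\to\infty}N(T,\Delta)/\Delta$; $F(T)=J(T)+\sum_i(K_i/T_i+H_iT_i)$. The convex relaxation (P) is: minimize $K_0/T_{\min}+\sum_{i\in[n]}(K_i/T_i+H_iT_i)$ over $(T_{\min},T_1,\dots,T_n)$ subject to $T_i\ge T_{\min}\ge0$ for all $i$ and $\sum_i\alpha_{id}/T_i\le1$ for all $d$. $\mathrm{OPT}(P)$ is its optimal value and $T^*=(T^*_{\min},T^*_1,\dots,T^*_n)$ is a fixed optimal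 solution (with $T^*_{\min}>0$). For $\theta\in[0,1]$: $\mathcal{H}^{3/2}_{2,1,\theta}=\{2^{p+\theta}T^*_{\min}:p\in\mathbb{Z}\}\cup\{\tfrac32\cdot2^{p+\theta}T^*_{\min}:p\in\mathbb{Z}\}$ and $\mathcal{R}^{3/2}_{2,1,\theta}(t)=\min\{g\in\mathcal{H}^{3/2}_{2,1,\theta}:g>t\}$ for $t>0$. *)

(* Defs.v *)
From HB Require Import structures.
From mathcomp Require Import all_boot all_order all_algebra.
From mathcomp Require Import all_classical all_reals all_analysis.
Set Implicit Arguments. Unset Strict Implicit. Unset Printing Implicit Defensive.
Import Order.TTheory GRing.Theory Num.Theory.
Import numFieldNormedType.Exports.
Local Open Scope classical_set_scope.
Local Open Scope ring_scope.

Section Defs.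
Variables (R : realType) (n D : nat).

Definition resource_feasible (alpha : 'I_n -> 'I_D -> R) (T : 'I_n -> R) : Prop :=
  (forall i, 0 < T i) /\ (forall d : 'I_D, \sum_(i < n) alpha i d / T i <= 1).

Definition Mset (g Delta : R) : seq R :=
  [seq (k%:R * g) | k <- iota 0 (Num.truncn (Delta / g)).+1].

Definition Ncount (T : 'I_n -> R) (Delta : R) : nat :=
  size (undup (flatten [seq Mset (T i) Delta | i <- enum 'I_n])).

Definition Jcost (K0 : R) (T : 'I_n -> R) : \bar R :=
  (K0%:E * limf_esup (fun Delta : R => ((Ncount T Delta)%:R / Delta)%:E) (pinfty_nbhs R))%E.

Definition Fcost (K0 : R) (K H : 'I_n -> R) (T : 'I_n -> R) : \bar R :=
  (Jcost K0 T + (\sum_(i < n) (K i / T i + H i * T i))%:E)%E.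

Definition Pobj (K0 : R) (K H : 'I_n -> R) (tmin : R) (t : 'I_n -> R) : R :=
  K0 / tmin + \sum_(i < n) (K i / t i + H i * t i).

Definition Pfeas (alpha : 'I_n -> 'I_D -> R) (tmin : R) (t : 'I_n -> R) : Prop :=
  0 < tmin /\ (forall i, tmin <= t i) /\
  (forall d : 'I_D, \sum_(i < n) alpha i d / t i <= 1).

Definition Hgrid (Tmin theta : R) : set R :=
  [set g | exists p : int,
     g = powR 2 (p%:~R + theta) * Tmin \/
     g = (3 / 2) * powR 2 (p%:~R + theta) * Tmin].

Definition Rround (Tmin theta t : R) : R :=
  inf [set g | Hgrid Tmin theta g /\ t < g].

End Defs.

(* Main.v *)
Require Import Defs.
From HB Require Import structures.
From mathcomp Require Import all_boot all_order all_algebra.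
From mathcomp Require Import all_classical all_reals all_analysis.
From mathcomp Require Import measurable_realfun.
From mathcomp Require Import ring lra zify.
Set Implicit Arguments. Unset Strict Implicit. Unset Printing Implicit Defensive.
Import Order.TTheory GRing.Theory Num.Theory.
Import numFieldNormedType.Exports.
Local Open Scope classical_set_scope.
Local Open Scope ring_scope.
Section Expo.
Variable R : realType.

Definition LL : R := ln (3/2) / ln 2.

Lemma ln2_gt0 : 0 < ln (2:R).
Proof. by rewrite ln_gt0 // ltr1n. Qed.

Lemma LL_gt0 : 0 < LL.
Proof. rewrite /LL divr_gt0 ?ln2_gt0 // ln_gt0 //; lra. Qed.

Lemma LL_lt1 : LL < 1.
Proof.
rewrite /LL ltr_pdivrMr ?ln2_gt0 // mul1r ltr_ln ?posrE //; lra.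
Qed.

Lemma pow2LL : powR 2 LL = 3/2 :> R.
Proof.
rewrite /powR (negbTE (_ : (2:R) != 0)) ?pnatr_eq0 //.
by rewrite /LL mulrAC -mulrA divff ?mulr1 ?lnK ?posrE ?gt_eqF ?ln2_gt0 //; lra.
Qed.

End Expo.
Section P2.
Variable R : realType.
Local Notation P := (@powR R 2).

Lemma PE x : P x = expR (x * ln 2).
Proof. by rewrite /powR (negbTE (_ : (2:R) != 0)) ?pnatr_eq0. Qed.

Lemma P_gt0 x : 0 < P x.
Proof. by rewrite PE expR_gt0. Qed.

Lemma P_ltP x y : (P x < P y) = (x < y).
Proof. by rewrite !PE ltr_expR ltr_pM2r ?ln2_gt0. Qed.

Lemma P_leP x y : (P x <= P y) = (x <= y).
Proof. by rewrite !PE ler_expR ler_pM2r ?ln2_gt0. Qed.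

Lemma PD x y : P (x + y) = P x * P y.
Proof. by rewrite !PE mulrDl expRD. Qed.

Lemma PN x : P (- x) = (P x)^-1.
Proof. by rewrite !PE mulNr expRN. Qed.

Lemma P1 : P 1 = 2.
Proof. by rewrite powRr1. Qed.

Definition log2 (x : R) := ln x / ln 2.

Lemma Plog2 x : 0 < x -> P (log2 x) = x.
Proof.
by move=> x0; rewrite PE /log2 -mulrA mulVf ?mulr1 ?lnK ?posrE // gt_eqF ?ln2_gt0.
Qed.

Lemma PLL : P (LL R) = 3/2.
Proof. exact: pow2LL. Qed.

Lemma P_int (z : int) : P z%:~R = 2 ^ z.
Proof. by rewrite powR_intmul. Qed.

Lemma P_nat (m : nat) : P m%:R = 2 ^+ m.
Proof. by rewrite powR_mulrn. Qed.

End P2.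
Section Grid.
Variable R : realType.
Local Notation P := (@powR R 2).
Local Notation L := (LL R).

Definition inG (th e : R) := exists p : int, e = p%:~R + th \/ e = p%:~R + th + L.
Definition kf (s th : R) : int := Num.floor (s - th).
Definition vf (s th : R) : R := s - th - (kf s th)%:~R.
Definition cf (v : R) : R := if v < L then L else 1.
Definition estar (s th : R) : R := th + (kf s th)%:~R + cf (vf s th).

Lemma vf_ge0 s th : 0 <= vf s th.
Proof. by rewrite /vf subr_ge0 /kf floor_le. Qed.

Lemma vf_lt1 s th : vf s th < 1.
Proof.
rewrite /vf /kf ltrBlDl; have := floorD1_gt (s - th).
by rewrite intrD.
Qed.

Lemma estar_in s th : inG th (estar s th).
Proof.
rewrite /estar /cf; case: ifP => _.
  by exists (kf s th); right; rewrite (addrC th).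
by exists (kf s th + 1); left; rewrite intrD; lra.
Qed.

Lemma estar_sub s th : estar s th - s = cf (vf s th) - vf s th.
Proof. rewrite /estar /vf; lra. Qed.

Lemma estar_gt s th : s < estar s th.
Proof.
rewrite -subr_gt0 estar_sub /cf; have := vf_lt1 s th.
case: ifPn => h; last rewrite -leNgt in h; have := LL_lt1 R; lra.
Qed.

Lemma estar_min s th e : inG th e -> s < e -> estar s th <= e.
Proof.
have v0 := vf_ge0 s th; have v1 := vf_lt1 s th;
have L0 := LL_gt0 R; have L1 := LL_lt1 R.
move: v0 v1; rewrite /estar /cf /vf.
move: (kf s th) => k v0 v1 [p [->|->]] hs.
- have hp : (k < p)%R by rewrite -(ltr_int R); lra.
  have hp' : ((k + 1)%:~R <= p%:~R :> R) by rewrite ler_int; lia.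
  rewrite intrD in hp'; case: ifPn => _; lra.
- have hp : (k <= p)%R.
    have : (k < p + 1)%R by rewrite -(ltr_int R) intrD; lra.
    lia.
  case: ifPn => hv.
    suff : (k%:~R <= p%:~R :> R) by lra.
    by rewrite ler_int.
  rewrite -leNgt in hv.
  have hp2 : (k < p)%R.
    rewrite lt_neqAle hp andbT; apply/negP => /eqP ek.
    by move: hs; rewrite -ek; lra.
  have hp' : ((k + 1)%:~R <= p%:~R :> R) by rewrite ler_int; lia.
  rewrite intrD in hp'; lra.
Qed.

Lemma Hgrid_inG Tmin th g : Hgrid Tmin th g -> exists2 e, inG th e & g = Tmin * P e.
Proof.
move=> [p [->|->]].
  by exists (p%:~R + th); [exists p; left|rewrite mulrC].
exists (p%:~R + th + L); first by exists p; right.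
by rewrite !PD (PLL R); ring.
Qed.

Lemma inG_Hgrid Tmin th e : inG th e -> Hgrid Tmin th (Tmin * P e).
Proof.
move=> [p [->|->]]; exists p; first by left; rewrite mulrC.
by right; rewrite !PD (PLL R); ring.
Qed.

Lemma Rround_E Tmin th t : 0 < Tmin -> 0 < t ->
  Rround Tmin th t = Tmin * P (estar (log2 (t / Tmin)) th).
Proof.
move=> T0 t0; set s := log2 (t / Tmin).
have ts : t = Tmin * P s by rewrite Plog2 ?divr_gt0 // mulrC divfK // gt_eqF.
set g0 := Tmin * P (estar s th).
have g0S : Hgrid Tmin th g0 /\ t < g0.
  split; first exact/inG_Hgrid/estar_in.
  by rewrite ts /g0 ltr_pM2l // P_ltP estar_gt.
have lb : forall g, Hgrid Tmin th g /\ t < g -> g0 <= g.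
  move=> g [/Hgrid_inG [e eG ->]]; rewrite ts ltr_pM2l // P_ltP => se.
  by rewrite /g0 ler_pM2l // P_leP estar_min.
rewrite /Rround; apply/le_anti/andP; split.
  by apply: ge_inf => //; exists g0 => g /lb.
by apply: lb_le_inf; [exists g0|move=> g /lb].
Qed.

End Grid.
Section Piece.
Variable R : realType.
Local Notation mu := (@lebesgue_measure R).

Lemma is_derive_expaff (k α d x : R) :
  is_derive x 1 (fun y => k * expR (α * (d - y))) (- (k * α) * expR (α * (d - x))).
Proof.
have h1 : is_derive x 1 (fun y => α * (d - y)) (- α).
  have -> : (- α) = α *: (0 - 1) by rewrite /GRing.scale /=; ring.
  apply: is_deriveZ; apply: is_deriveB.
have h2 : is_derive (α * (d - x)) 1 (fun y => k * expR y) (k * expR (α * (d - x))).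
  have -> : k * expR (α * (d - x)) = k *: expR (α * (d - x)) by [].
  by apply: is_deriveZ.
have := @is_derive1_comp R (fun y => k * expR y) (fun y => α * (d - y)) x _ _ h2 h1.
by rewrite /comp; congr is_derive; ring.
Qed.

End Piece.
Section Piece2.
Variable R : realType.
Local Notation mu := (@lebesgue_measure R).

Lemma piece_integral (c α d a b : R) : α != 0 -> a <= b ->
  (\int[mu]_(x in `[a, b]) (c * expR (α * (d - x)))%:E =
   ((c / α) * (expR (α * (d - a)) - expR (α * (d - b))))%:E)%E.
Proof.
move=> α0; rewrite le_eqVlt => /predU1P[<-|ab].
  by rewrite set_itv1 integral_set1 subrr mulr0.
pose F := fun y : R => (- (c / α)) * expR (α * (d - y)).
have dF : forall x : R, is_derive x (1:R) F (c * expR (α * (d - x))).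
  move=> x; have := is_derive_expaff (- (c / α)) α d x.
  by congr is_derive; field.
have cF : continuous F.
  move=> x; apply: differentiable_continuous; apply/derivable1_diffP.
  by case: (dF x).
rewrite (@continuous_FTC2 _ _ F a b ab).
- by rewrite -EFinB /F; congr EFin; ring.
- apply: continuous_subspaceT => x.
  have : continuous (fun y : R => c * expR (α * (d - y))).
    move=> y; apply: differentiable_continuous; apply/derivable1_diffP.
    by case: (is_derive_expaff c α d y).
  by move/(_ x).
- split.
  + by move=> x _; case: (dF x).
  + exact: cvg_at_right_filter (cF a).
  + exact: cvg_at_left_filter (cF b).
- by move=> x _; rewrite derive1E; case: (dF x).
Qed.

End Piece2.
Section Split.
Variable R : realType.
Local Notation mu := (@lebesgue_measure R).

Lemma integral_split (h : R -> \bar R) (a m b : R) : a <= m -> m <= b ->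
  measurable_fun (`[a, b] : set R) h ->
  (\int[mu]_(x in `[a, b]) h x = \int[mu]_(x in `[a, m]) h x + \int[mu]_(x in `[m, b]) h x)%E.
Proof.
move=> am mb mh.
have e : `[a, b]%classic = `[a, m]%classic `|` `]m, b]%classic :> set R.
  by apply: itv_bndbnd_setU; rewrite bnd_simp.
  
have mh' := mh; rewrite e in mh'.
rewrite e integral_setU //; last first.
  apply/disj_setPLR => x; rewrite /= !in_itv /= => /andP[_ xm] /andP[mx _].
  by move: (lt_le_trans mx xm); rewrite ltxx.
rewrite integral_itv_obnd_cbnd //.
by apply: measurable_funS mh'; [apply: measurableU|move=> x xi; right].
Qed.

End Split.
Section Phi.
Variable R : realType.
Local Notation mu := (@lebesgue_measure R).
Local Notation L := (LL R).

Definition phi (a b α v : R) := (if v < L then a else b) * expR (α * v).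

Lemma measurable_floorR : measurable_fun [set: R] (fun x : R => (Num.floor x)%:~R : R).
Proof.
apply: nondecreasing_measurable => // x y xy.
by rewrite ler_int le_floor.
Qed.

Lemma measurable_vf s : measurable_fun [set: R] (vf s).
Proof.
rewrite /vf /kf.
have ms : measurable_fun [set: R] (fun th : R => s - th).
  by apply: measurable_funB => //; exact: measurable_cst.
apply: measurable_funB => //.
exact: (measurableT_comp measurable_floorR ms).
Qed.

Lemma measurable_phi a b α s : measurable_fun [set: R] (fun th => phi a b α (vf s th)).
Proof.
rewrite /phi; apply: measurable_funM.
  apply: measurable_fun_ifT.
  - apply: measurable_fun_ltr; first exact: measurable_vf.
    exact: measurable_cst.
  - exact: measurable_cst.
  - exact: measurable_cst.
apply: (measurableT_comp (@measurable_expR R)).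
by apply: measurable_funM; [exact: measurable_cst|exact: measurable_vf].
Qed.

End Phi.
Section IntPhi.
Variable R : realType.
Local Notation mu := (@lebesgue_measure R).
Local Notation L := (LL R).

Lemma vf_left (s th : R) : 0 <= th -> th <= s - (Num.floor s)%:~R ->
  vf s th = s - (Num.floor s)%:~R - th.
Proof.
move=> t0 tf; rewrite /vf /kf.
have -> : Num.floor (s - th) = Num.floor s.
  apply: floor_def; have := floorD1_gt s; have := floor_le s.
  rewrite intrD => h1 h2; apply/andP; split; lra.
lra.
Qed.

Lemma vf_right (s th : R) : s - (Num.floor s)%:~R < th -> th <= 1 ->
  vf s th = s - (Num.floor s)%:~R + 1 - th.
Proof.
move=> tf t1; rewrite /vf /kf.
have e1 : ((-1)%:~R : R) = -1 by rewrite mulrNz.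
have e2 : ((1)%:~R : R) = 1 by [].
have -> : Num.floor (s - th) = Num.floor s - 1.
  apply: floor_def; have := floorD1_gt s; have := floor_le s.
  rewrite !intrD e1 e2 => h1 h2; apply/andP; split; lra.
rewrite intrD e1; lra.
Qed.

Lemma piece_eq (a b α s x y c d : R) :
  x <= y ->
  {in `]x, y[, forall th, phi a b α (vf s th) = c * expR (α * (d - th))} ->
  (\int[mu]_(th in `[x, y]) (phi a b α (vf s th))%:E =
   \int[mu]_(th in `[x, y]) (c * expR (α * (d - th)))%:E)%E.
Proof.
move=> xy heq; apply: eq_integral_itv_bounded => //.
- exact: measurable_funTS (measurable_phi a b α s).
- apply: measurable_funTS.
  apply: measurable_funM; first exact: measurable_cst.
  apply: (measurableT_comp (@measurable_expR R)).
  apply: measurable_funM; first exact: measurable_cst.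
  by apply: measurable_funB => //; exact: measurable_cst.
Qed.

Lemma int_phi (a b α s : R) : α != 0 ->
  (\int[mu]_(th in `[0%R, 1%R]) (phi a b α (vf s th))%:E =
   ((a * (expR (α * L) - 1) + b * (expR α - expR (α * L))) / α)%:E)%E.
Proof.
move=> α0.
set f := s - (Num.floor s)%:~R.
have f0 : 0 <= f by rewrite /f subr_ge0 floor_le.
have f1 : f < 1 by rewrite /f ltrBlDl; have := floorD1_gt s; rewrite intrD.
have L0 := LL_gt0 R; have L1 := LL_lt1 R.
have mh : measurable_fun (`[0, 1] : set R) (fun th => (phi a b α (vf s th))%:E).
  by apply/measurable_EFinP; apply: measurable_funTS; exact: measurable_phi.
have mhS : forall x y : R, measurable_fun (`[x, y] : set R) (fun th => (phi a b α (vf s th))%:E).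
  by move=> x y; apply/measurable_EFinP; apply: measurable_funTS; exact: measurable_phi.
case: (leP L f) => hf.
- rewrite (@integral_split _ _ 0 (f - L) 1); [|lra|lra|exact: mh].
  rewrite (@integral_split _ _ (f - L) f 1); [|lra|lra|exact: mhS].
  rewrite (@piece_eq a b α s 0 (f - L) b f); first last.
  + move=> th; rewrite in_itv /= => /andP[t0 t1].
    rewrite vf_left -/f; [|lra|lra]; rewrite /phi ifF //; apply/negbTE; rewrite -leNgt; lra.
  + lra.
  rewrite (@piece_eq a b α s (f - L) f a f); first last.
  + move=> th; rewrite in_itv /= => /andP[t0 t1].
    rewrite vf_left -/f; [|lra|lra]; rewrite /phi ifT //; lra.
  + lra.
  rewrite (@piece_eq a b α s f 1 b (f + 1)); first last.
  + move=> th; rewrite in_itv /= => /andP[t0 t1].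
    rewrite vf_right -/f; [|lra|lra]; rewrite /phi ifF; first by congr (_ * expR _); lra.
    by apply/negbTE; rewrite -leNgt; lra.
  + lra.
  have p1 : 0 <= f - L by lra. have p2 : f - L <= f by lra. have p3 : f <= 1 by lra.
  rewrite !piece_integral //.
  rewrite -!EFinD; congr EFin.
  have -> : f - (f - L) = L by lra.
  have -> : f + 1 - f = 1 by lra.
  rewrite subrr mulr0 expR0 !subr0 mulr1.
  have -> : f + 1 - 1 = f by lra.
  by field.
- rewrite (@integral_split _ _ 0 f 1); [|lra|lra|exact: mh].
  rewrite (@integral_split _ _ f (f + 1 - L) 1); [|lra|lra|exact: mhS].
  rewrite (@piece_eq a b α s 0 f a f); first last.
  + move=> th; rewrite in_itv /= => /andP[t0 t1].
    rewrite vf_left -/f; [|lra|lra]; rewrite /phi ifT //; lra.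
  + lra.
  rewrite (@piece_eq a b α s f (f + 1 - L) b (f + 1)); first last.
  + move=> th; rewrite in_itv /= => /andP[t0 t1].
    rewrite vf_right -/f; [|lra|lra]; rewrite /phi ifF; first by congr (_ * expR _); lra.
    by apply/negbTE; rewrite -leNgt; lra.
  + lra.
  rewrite (@piece_eq a b α s (f + 1 - L) 1 a (f + 1)); first last.
  + move=> th; rewrite in_itv /= => /andP[t0 t1].
    rewrite vf_right -/f; [|lra|lra]; rewrite /phi ifT; first by congr (_ * expR _); lra.
    lra.
  + lra.
  have p2 : f <= f + 1 - L by lra. have p3 : f + 1 - L <= 1 by lra.
  rewrite !piece_integral //.
  rewrite -!EFinD; congr EFin.
  have -> : f + 1 - (f + 1 - L) = L by lra.
  have -> : f + 1 - f = 1 by lra.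
  rewrite subrr mulr0 expR0 !subr0 ?mulr1.
  have -> : f + 1 - 1 = f by lra.
  by field.
Qed.

End IntPhi.
Section Mono.
Variable R : realType.
Local Notation mu := (@lebesgue_measure R).
Local Open Scope ereal_scope.

Lemma le_integral_nn (D : set R) (f g : R -> \bar R) :
  (forall x, D x -> 0 <= f x) -> (forall x, D x -> f x <= g x) ->
  \int[mu]_(x in D) f x <= \int[mu]_(x in D) g x.
Proof.
move=> f0 fg.
rewrite (ge0_integralE mu f0) (@ge0_integralE _ _ _ mu _ g); last first.
  by move=> x Dx; apply: le_trans (f0 x Dx) (fg x Dx).
apply: ereal_sup_le => _ [h hf <-]; exists h => //= x.
apply: le_trans (hf x) _; rewrite /patch; case: ifP => // xD.
by apply: fg; rewrite inE in xD.
Qed.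

Lemma le_integral_gen (D : set R) (f g : R -> \bar R) :
  (forall x, D x -> 0 <= g x) -> (forall x, D x -> f x <= g x) ->
  \int[mu]_(x in D) f x <= \int[mu]_(x in D) g x.
Proof.
move=> g0 fg.
rewrite integralE [X in _ <= X]integralE.
apply: leeB.
  apply: le_integral_nn => x Dx; first exact: funepos_ge0.
  by apply: (@funepos_le _ _ D) => //; [move=> y; rewrite inE => /fg| rewrite inE].
apply: (@le_trans _ _ 0); last by apply: integral_ge0 => x _; exact: funeneg_ge0.
rewrite integral0_eq // => x Dx.
by apply: (@ge0_funenegE _ _ D) => //; rewrite inE.
Qed.

End Mono.
Section CountNat.
Local Open Scope nat_scope.

Lemma periodic_mul (P : pred nat) q : (forall x, P (x + q) = P x) ->
  forall b x, P (q * b + x) = P x.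
Proof.
move=> hP; elim=> [|b IH] x; first by rewrite muln0.
by rewrite mulnS (addnC q) -addnA (addnC q) addnA hP IH.
Qed.

Lemma count_iota_mul (P : pred nat) q b : (forall x, P (x + q) = P x) ->
  count P (iota 0 (q * b)) = (count P (iota 0 q) * b)%N.
Proof.
move=> hP; elim: b => [|b IH]; first by rewrite !muln0.
rewrite mulnS addnC iotaD count_cat IH add0n -(addn0 (q * b)) iotaDl count_map.
rewrite mulnS addnC; congr addn; apply: eq_count => x /=.
by rewrite periodic_mul.
Qed.

Lemma count_iota_le (P : pred nat) q M : (0 < q)%N -> (forall x, P (x + q) = P x) ->
  (count P (iota 0 M.+1) <= count P (iota 0 q) * (M %/ q).+1)%N.
Proof.
move=> q0 hP; rewrite -count_iota_mul //.
have h : (M.+1 <= q * (M %/ q).+1)%N by rewrite mulnC; apply: ltn_ceil.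
by rewrite -(subnKC h) iotaD count_cat leq_addr.
Qed.

End CountNat.

Section Jbound.
Variables (R : realType) (n : nat).

Lemma Ncount_bound (T : 'I_n -> R) (u : R) (S : pred nat) (Δ : R) :
  0 < u -> 0 <= Δ -> (forall i, 0 < T i) ->
  (forall i, exists2 m : nat, T i = m%:R * u & forall k, S (k * m)%N) ->
  (Ncount T Δ <= count S (iota 0 (Num.truncn (Δ / u)).+1))%N.
Proof.
move=> u0 D0 T0 hT; rewrite /Ncount.
set M := Num.truncn (Δ / u).
apply: (@leq_trans (size (map (fun N : nat => N%:R * u) (seq.filter S (iota 0 M.+1))))); last first.
  by rewrite size_map size_filter.
apply: uniq_leq_size; first exact: undup_uniq.
move=> x; rewrite mem_undup => /flattenP [s /mapP [i _ ->]] /mapP [k].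
rewrite mem_iota add0n ltnS => kl ->.
have [m Tm Sm] := hT i.
have Ti0 := T0 i.
have hk : k%:R <= Δ / T i by rewrite -truncn_ge_nat // divr_ge0 // ltW.
apply/mapP; exists (k * m)%N; last by rewrite Tm natrM mulrA.
rewrite mem_filter Sm mem_iota add0n /= ltnS /M truncn_ge_nat; last first.
  by rewrite divr_ge0 // ltW.
rewrite ler_pdivlMr // natrM -mulrA -Tm -ler_pdivlMr //.
Qed.

Lemma Jcost_le (K0 : R) (T : 'I_n -> R) (u c C : R) : 0 <= K0 -> 0 <= C ->
  (forall Δ, 0 < Δ -> (Ncount T Δ)%:R <= c * Δ / u + C) ->
  (Jcost K0 T <= (K0 * (c / u))%:E)%E.
Proof.
move=> K00 C0 hN; rewrite /Jcost EFinM; apply: lee_wpmul2l; first by rewrite lee_fin.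
apply/lee_addgt0Pr => e e0.
apply: le_trans.
  apply: ereal_inf_lbound; exists [set Δ : R | C / e + 1 < Δ]; last reflexivity.
  by exists (C / e + 1); split => //; rewrite realE; apply/orP; left; rewrite addr_ge0 ?divr_ge0 // ltW.
apply: ge_ereal_sup => _ [Δ /= hΔ <-]; rewrite -EFinD lee_fin.
have Ce : 0 <= C / e by rewrite divr_ge0 // ltW.
have Δ0 : 0 < Δ by lra.
rewrite ler_pdivrMr // (le_trans (hN _ Δ0)) //.
rewrite mulrDl [c / u * Δ]mulrAC lerD2l.
have : C / e < Δ by lra.
by rewrite ltr_pdivrMr // => /ltW; rewrite mulrC.
Qed.

End Jbound.
Section Jround.
Variables (R : realType) (n : nat).
Local Notation P := (@powR R 2).
Local Notation L := (LL R).

Lemma P_shift (b p : int) (x : R) : (b <= p)%R ->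
  exists j : nat, P (p%:~R + x) = P (b%:~R + x) * (2 ^ j)%:R.
Proof.
move=> bp; exists `|p - b|%N.
have -> : p%:~R + x = (`|p - b|%N)%:R + (b%:~R + x) :> R.
  have hj : ((`|p - b|%N) : int) = p - b by rewrite abszE ger0_norm // subr_ge0.
  have h : ((`|p - b|%N)%:R : R) = (p - b)%:~R by rewrite -hj.
  by rewrite h intrB; ring.
by rewrite PD P_nat natrX mulrC.
Qed.

Definition SA (N : nat) := (2 %| N)%N || (3 %| N)%N.
Definition SB (N : nat) := (3 %| N)%N || (4 %| N)%N.

Lemma SA_per x : SA (x + 6) = SA x.
Proof. by rewrite /SA !dvdn_addl. Qed.
Lemma SB_per x : SB (x + 12) = SB x.
Proof. by rewrite /SB !dvdn_addl. Qed.

Lemma count_real (S : pred nat) (q r : nat) (Δ u : R) : (0 < q)%N -> 0 < u -> 0 <= Δ ->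
  (forall x, S (x + q)%N = S x) -> count S (iota 0 q) = r ->
  (count S (iota 0 (Num.truncn (Δ / u)).+1))%:R <= r%:R / q%:R * Δ / u + r%:R.
Proof.
move=> q0 u0 D0 hS hr.
set M := Num.truncn (Δ / u).
have h1 := count_iota_le M q0 hS; rewrite hr in h1.
apply: (@le_trans _ _ ((r * (M %/ q).+1)%N%:R)); first by rewrite ler_nat.
rewrite natrM -addn1 natrD mulrDr mulr1 lerD2r.
have hM : (M %/ q)%:R <= M%:R / q%:R :> R.
  rewrite ler_pdivlMr ?ltr0n // -natrM ler_nat; exact: leq_divM.
have hM2 : M%:R <= Δ / u by rewrite /M truncn_le divr_ge0 // ltW.
have r0 : 0 <= r%:R :> R by [].
rewrite -mulrA -mulrA; apply: ler_wpM2l => //.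
apply: le_trans hM _; rewrite [M%:R / _]mulrC; apply: ler_wpM2l => //; by rewrite invr_ge0 ler0n.
Qed.

End Jround.
Section Jround2.
Variables (R : realType) (n : nat).
Local Notation P := (@powR R 2).
Local Notation L := (LL R).

Lemma P_succ (k : int) (x : R) : P ((k + 1)%:~R + x) = 2 * P (k%:~R + x).
Proof.
have -> : (k + 1)%:~R + x = 1 + (k%:~R + x) :> R by rewrite intrD; by ring.
by rewrite PD P1.
Qed.

Lemma Jround (K0 Tmin th : R) (e : 'I_n -> R) : 0 <= K0 -> 0 < Tmin ->
  (forall i, inG th (e i)) -> (forall i, estar 0 th <= e i) ->
  (Jcost K0 (fun i => (Tmin * P (e i))%R) <=
     (K0 / Tmin * phi 1 (2/3) (ln 2) (vf 0 th))%R%:E)%E.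
Proof.
move=> K00 T0 eG ege.
have L0 := LL_gt0 R; have L1 := LL_lt1 R.
have Tpos : forall i, 0 < Tmin * P (e i) by move=> i; rewrite mulr_gt0 ?P_gt0.
have ev : vf 0 th = 0 - th - (kf 0 th)%:~R by [].
have es : estar 0 th = th + (kf 0 th)%:~R + cf (vf 0 th) by [].
move: ev es ege; set k0 := kf 0 th; set v0 := vf 0 th => ev es ege.
have Pk : P (k0%:~R + th) = (expR (ln 2 * v0))^-1.
  by rewrite (_ : k0%:~R + th = - v0); [rewrite PN PE mulrC|rewrite ev; ring].
have Epos : 0 < expR (ln 2 * v0) by rewrite expR_gt0.
have Pk0 : 0 < P (k0%:~R + th) by apply: P_gt0.
case: (ltP v0 L) => hv.
-
  have hcf : cf v0 = L by rewrite /cf hv.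
  pose u := Tmin * P (k0%:~R + th) / 2.
  have u0 : 0 < u by rewrite /u divr_gt0 // mulr_gt0.
  have hT : forall i, exists2 m : nat, Tmin * P (e i) = m%:R * u & forall k, SB (k * m)%N.
    move=> i; have := ege i; rewrite es hcf; case: (eG i) => p [-> | ->] hpe.
    + have hp : (k0 + 1 <= p)%R.
        have : (k0 < p)%R by rewrite -(ltr_int R); lra.
        lia.
      have [j hj] := P_shift th hp.
      exists (4 * 2 ^ j)%N; last by move=> k; apply/orP; right; apply: dvdn_mull; apply: dvdn_mulr.
      rewrite hj P_succ /u natrM natrX; by field.
    + have hq : (k0 <= p)%R.
        rewrite -(ler_int R); lra.
      have [j hj] := P_shift th hq.
      exists (3 * 2 ^ j)%N; last by move=> k; apply/orP; left; apply: dvdn_mull; apply: dvdn_mulr.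
      rewrite PD hj (PLL R) /u natrM !natrX; by field.
  apply: (@le_trans _ _ (K0 * ((6%:R / 12%:R) / u))%:E).
    apply: (@Jcost_le _ _ _ _ _ _ (6%:R)) => // D D0.
    apply: (@le_trans _ _ (count SB (iota 0 (Num.truncn (D / u)).+1))%:R).
      by rewrite ler_nat; apply: (@Ncount_bound _ _ _ u SB) => //; exact: ltW.
    have := @count_real R SB 12 6 D u isT u0 (ltW D0) SB_per erefl.
    by [].
  rewrite lee_fin /phi hv /u Pk; rewrite le_eqVlt; apply/orP; left; apply/eqP.
  field; rewrite ?gt_eqF //.
-
  have hcf : cf v0 = 1 by rewrite /cf ltNge hv.
  pose u := Tmin * P (k0%:~R + th).
  have u0 : 0 < u by rewrite /u mulr_gt0.
  have hT : forall i, exists2 m : nat, Tmin * P (e i) = m%:R * u & forall k, SA (k * m)%N.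
    move=> i; have := ege i; rewrite es hcf; case: (eG i) => p [-> | ->] hpe.
    + have hp : (k0 + 1 <= p)%R by rewrite -(ler_int R) intrD; lra.
      have [j hj] := P_shift th hp.
      exists (2 * 2 ^ j)%N; last by move=> k; apply/orP; left; apply: dvdn_mull; apply: dvdn_mulr.
      rewrite hj P_succ /u natrM natrX; by ring.
    + have hp : (k0 + 1 <= p)%R.
        have : (k0 < p)%R by rewrite -(ltr_int R); lra.
        lia.
      have [j hj] := P_shift th hp.
      exists (3 * 2 ^ j)%N; last by move=> k; apply/orP; right; apply: dvdn_mull; apply: dvdn_mulr.
      rewrite PD hj P_succ (PLL R) /u natrM !natrX; by field.
  apply: (@le_trans _ _ (K0 * ((4%:R / 6%:R) / u))%:E).
    apply: (@Jcost_le _ _ _ _ _ _ (4%:R)) => // D D0.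
    apply: (@le_trans _ _ (count SA (iota 0 (Num.truncn (D / u)).+1))%:R).
      by rewrite ler_nat; apply: (@Ncount_bound _ _ _ u SA) => //; exact: ltW.
    have := @count_real R SA 6 4 D u isT u0 (ltW D0) SA_per erefl.
    by [].
  rewrite lee_fin /phi ltNge hv /= /u Pk; rewrite le_eqVlt; apply/orP; left; apply/eqP.
  field; rewrite ?gt_eqF //.
Qed.

End Jround2.
Section Final.
Variable R : realType.
Local Notation mu := (@lebesgue_measure R).
Local Notation P := (@powR R 2).
Local Notation L := (LL R).

Lemma phi_ge0 (a b α v : R) : 0 <= a -> 0 <= b -> 0 <= phi a b α v.
Proof.
by move=> a0 b0; rewrite /phi mulr_ge0 ?expR_ge0 //; case: ifP.
Qed.

Lemma int_term (c a b α s : R) : 0 <= c -> 0 <= a -> 0 <= b -> α != 0 ->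
  (\int[mu]_(th in `[0%R, 1%R]) (c * phi a b α (vf s th))%:E =
   (c * ((a * (expR (α * L) - 1) + b * (expR α - expR (α * L))) / α))%:E)%E.
Proof.
move=> c0 a0 b0 α0.
under eq_integral => x _ do rewrite EFinM.
rewrite ge0_integralZl_EFin //.
- by rewrite int_phi // -EFinM.
- by move=> x _; rewrite lee_fin phi_ge0.
- by apply/measurable_EFinP; apply: measurable_funTS; exact: measurable_phi.
Qed.

Lemma meas_term (c a b α s : R) :
  measurable_fun (`[0%R, 1%R] : set R) (fun th => (c * phi a b α (vf s th))%:E).
Proof.
apply/measurable_EFinP; apply: measurable_funTS.
by apply: measurable_funM; [exact: measurable_cst|exact: measurable_phi].
Qed.

Lemma expR_ln2L : expR (ln 2 * L) = 3 / 2 :> R.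
Proof. by rewrite -(PLL R) PE mulrC. Qed.

Lemma expR_ln2 : expR (ln 2) = 2 :> R.
Proof. by rewrite lnK // posrE. Qed.

Lemma ratio1 (v : R) : P (cf v - v) = phi (3/2) 2 (- ln 2) v.
Proof.
rewrite /phi /cf; case: ifP => _.
  by rewrite PD PN (PLL R) PE mulNr expRN [v * _]mulrC.
by rewrite PD PN P1 PE mulNr expRN [v * _]mulrC.
Qed.

Lemma ratio2 (v : R) : P (v - cf v) = phi (2/3) (1/2) (ln 2) v.
Proof.
rewrite /phi /cf; case: ifP => _.
  by rewrite PD PN (PLL R) PE [v * _]mulrC; field.
by rewrite PD PN P1 PE [v * _]mulrC; field.
Qed.

End Final.
Unset Implicit Arguments.

Theorem lemma4p2 (R : realType) (n D : nat)
  (K0 : R) (K H : 'I_n -> R) (alpha : 'I_n -> 'I_D -> R)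
  (Tmin : R) (Tstar : 'I_n -> R) :
  (0 < n)%N -> (0 < D)%N -> 0 < K0 ->
  (forall i, 0 < K i) -> (forall i, 0 < H i) ->
  (forall i d, 0 <= alpha i d) ->
  Pfeas alpha Tmin Tstar ->
  (forall tmin t, Pfeas alpha tmin t ->
     Pobj K0 K H Tmin Tstar <= Pobj K0 K H tmin t) ->
  let Ttheta := fun (theta : R) (i : 'I_n) => Rround Tmin theta (Tstar i) in
  {ae (@lebesgue_measure R), forall theta : R,
     theta \in `[0, 1] -> resource_feasible alpha (Ttheta theta)} /\
  (\int[@lebesgue_measure R]_(theta in `[0%R, 1%R]) Fcost K0 K H (Ttheta theta)
     <= ((5 / (6 * ln 2)) * Pobj K0 K H Tmin Tstar)%:E)%E.
Proof.
move=> n0 D0 K00 K0i H0i al0 hfeas _ Ttheta.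
have [T0 [Tge Tsum]] := hfeas.
have Ts0 : forall i, 0 < Tstar i by move=> i; apply: lt_le_trans T0 (Tge i).
pose s i := log2 (Tstar i / Tmin).
have s0 : forall i, 0 <= s i.
  move=> i; rewrite /s /log2; apply: divr_ge0; last exact: ltW (ln2_gt0 R).
  by apply: ln_ge0; rewrite ler_pdivlMr // mul1r.
have Tst : forall i, Tstar i = Tmin * powR 2 (s i).
  by move=> i; rewrite /s Plog2 ?divr_gt0 // mulrC divfK // gt_eqF.
have TE : forall th i, Ttheta th i = Tmin * powR 2 (estar (s i) th).
  by move=> th i; rewrite /Ttheta Rround_E.
have TE2 : forall th i, Ttheta th i = Tstar i * powR 2 (cf (vf (s i) th) - vf (s i) th).
  move=> th i; rewrite TE Tst -estar_sub -mulrA -PD; congr (_ * powR 2 _); ring.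
have Tpos : forall th i, 0 < Ttheta th i by move=> th i; rewrite TE mulr_gt0 // P_gt0.
have Tge2 : forall th i, Tstar i <= Ttheta th i.
  move=> th i; rewrite TE2 ler_peMr ?(ltW (Ts0 i)) //.
  rewrite -[X in X <= _](powRr0 (2:R)) P_leP -estar_sub subr_ge0; apply: ltW.
  exact: estar_gt.
split.
  apply: aeW => th _; split; first exact: Tpos.
  move=> d; apply: le_trans (Tsum d); apply: ler_sum => i _.
  apply: ler_wpM2l => //; rewrite lef_pV2 ?posrE //; exact: Tge2.
pose L := LL R.
pose jt th := K0 / Tmin * phi 1 (2/3) (ln 2) (vf 0 th).
pose kt i th := K i / Tstar i * phi (2/3) (1/2) (ln 2) (vf (s i) th).
pose ht i th := H i * Tstar i * phi (3/2) 2 (- ln 2) (vf (s i) th).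
have cJ : 0 <= K0 / Tmin by rewrite divr_ge0 // ltW.
have cK : forall i, 0 <= K i / Tstar i by move=> i; rewrite divr_ge0 // ltW.
have cH : forall i, 0 <= H i * Tstar i by move=> i; rewrite mulr_ge0 // ltW.
have FG : forall th, (Fcost K0 K H (Ttheta th) <=
    (jt th)%:E + \sum_(i < n) ((kt i th)%:E + (ht i th)%:E))%E.
  move=> th; rewrite /Fcost; apply: leeD.
  - have -> : Ttheta th = fun i => (Tmin * powR 2 (estar (s i) th))%R.
      by apply/funext => i; exact: TE.
    apply: Jround => //; first exact: ltW.
      by move=> i; exact: estar_in.
    move=> i; apply: estar_min; first exact: estar_in.
    exact: le_lt_trans (s0 i) (estar_gt _ _).
  - rewrite sumEFin lee_fin le_eqVlt; apply/orP; left; apply/eqP.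
    apply: eq_bigr => i _; rewrite TE2 /kt /ht -ratio1 -ratio2.
    have -> : vf (s i) th - cf (vf (s i) th) = - (cf (vf (s i) th) - vf (s i) th) by ring.
    rewrite PN; field.
    by rewrite (gt_eqF (P_gt0 _)) (gt_eqF (Ts0 i)).
have l0 := ln2_gt0 R.
have ln0 : ln (2:R) != 0 by rewrite gt_eqF.
have eJ : (1 * (expR (ln 2 * L) - 1) + 2/3 * (expR (ln 2) - expR (ln 2 * L))) / ln 2
    = 5 / (6 * ln 2) :> R.
  rewrite expR_ln2L expR_ln2; by field.
have eK : (2/3 * (expR (ln 2 * L) - 1) + 1/2 * (expR (ln 2) - expR (ln 2 * L))) / ln 2
    = 7 / (12 * ln 2) :> R.
  rewrite expR_ln2L expR_ln2; by field.
have eH : (3/2 * (expR (- ln 2 * L) - 1) + 2 * (expR (- ln 2) - expR (- ln 2 * L))) / - ln 2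
    = 5 / (6 * ln 2) :> R.
  rewrite mulNr !expRN expR_ln2L expR_ln2; by field.
have a1 : (0:R) <= 1 by []. have a23 : (0:R) <= 2/3 by lra. have a12 : (0:R) <= 1/2 by lra.
have a32 : (0:R) <= 3/2 by lra. have a2 : (0:R) <= 2 by [].
have nln0 : - ln (2:R) != 0 by rewrite oppr_eq0.
apply: (@le_trans _ _ (\int[@lebesgue_measure R]_(th in `[0%R, 1%R])
   ((jt th)%:E + \sum_(i < n) ((kt i th)%:E + (ht i th)%:E)))%E).
  apply: le_integral_gen => th _; last exact: FG.
  apply: adde_ge0; first by rewrite lee_fin mulr_ge0 // phi_ge0.
  apply: sume_ge0 => i _; apply: adde_ge0; by rewrite lee_fin mulr_ge0 // phi_ge0.
have hi : forall i, (\int[@lebesgue_measure R]_(th in `[0%R, 1%R]) ((kt i th)%:E + (ht i th)%:E)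
    = (K i / Tstar i * (7 / (12 * ln 2)))%:E + (H i * Tstar i * (5 / (6 * ln 2)))%:E)%E.
  move=> i; rewrite ge0_integralD //.
  - by rewrite /kt /ht !int_term // eK eH.
  - by move=> th _; rewrite lee_fin mulr_ge0 // phi_ge0.
  - exact: meas_term.
  - by move=> th _; rewrite lee_fin mulr_ge0 // phi_ge0.
  - exact: meas_term.
rewrite ge0_integralD //; first last.
- apply: emeasurable_sum => i; apply: emeasurable_funD; exact: meas_term.
- move=> th _; apply: sume_ge0 => i _; apply: adde_ge0; by rewrite lee_fin mulr_ge0 // phi_ge0.
- exact: meas_term.
- by move=> th _; rewrite lee_fin mulr_ge0 // phi_ge0.
rewrite ge0_integral_sum //; first last.
- by move=> i th _; apply: adde_ge0; rewrite lee_fin mulr_ge0 // phi_ge0.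
- by move=> i; apply: emeasurable_funD; exact: meas_term.
rewrite (eq_bigr _ (fun i _ => hi i)) /jt int_term // eJ.
under eq_bigr => i _ do rewrite -EFinD.
rewrite sumEFin -EFinD lee_fin /Pobj mulrDr mulr_sumr.
apply: lerD; first by rewrite mulrC.
apply: ler_sum => i _; rewrite mulrDr [5 / (6 * ln 2) * (H i * Tstar i)]mulrC.
rewrite [5 / (6 * ln 2) * (K i / Tstar i)]mulrC lerD2r ler_wpM2l //.
have -> : 7 / (12 * ln 2) = 7 / 12 * (ln 2)^-1 :> R by field.
have -> : 5 / (6 * ln 2) = 5 / 6 * (ln 2)^-1 :> R by field.
rewrite ler_wpM2r ?invr_ge0 ?(ltW l0) //; lra.
Qed.
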